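(* Let $F \in S$ be a homogeneous form of degree $d$ and let $\alpha \in T_1$ be a linear form. Then $r(F) \geq \mathrm{al}(\alpha\circ F) - \mathrm{al}(\alpha^2\circ F)$.
   Context: $S=\mathbb{C}[x_1,\dots,x_n]$, $T=\mathbb{C}[\alpha_1,\dots,\alpha_n]$ acting on $S$ by $\alpha_i\mapsto\partial/\partial x_i$ (written $\Theta\circ F$). $\mathrm{al}(G)=\dim_{\mathbb{C}}\{\Theta\circ G:\Theta\in T\}$ is the apolar length (dimension of the space of all partial derivatives of all orders of $G$, including $G$; it is $0$ if $G=0$). $r(F)$ is the Waring rank: the least $r$ with $F=\sum_{i=1}^r c_i\ell_i^d$ for linear forms $\ell_i$ and scalars $c_i$. *)

(* Defs.v *)
From HB Require Import structures.
From mathcomp Require Import all_boot all_order all_algebra.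
Set Implicit Arguments. Unset Strict Implicit. Unset Printing Implicit Defensive.
Import Order.TTheory GRing.Theory Num.Theory.
Local Open Scope ring_scope.

(* Model of the polynomial ring S = K[x_1..x_n] restricted to the
   finite-dimensional subspace P_{n,d} of polynomials in which every
   variable occurs with exponent <= d.  This subspace contains every
   polynomial of total degree <= d and is closed under all partial
   derivatives, so everything in the statement lives in it. *)

Notation mon n d := {ffun 'I_n -> 'I_d.+1}.

Notation mpoly K n d := {ffun mon n d -> K^o}.

Section MPoly.
Variables (K : fieldType) (n d : nat).

Definition mdeg (m : mon n d) : nat := (\sum_(i < n) (m i : nat))%N.

Definition homogeneous (e : nat) (p : mpoly K n d) : Prop :=
  forall m : mon n d, p m != 0 -> mdeg m = e.

(* product (monomials whose exponents would exceed d are dropped; this is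
   exact on products of total degree <= d, e.g. powers l^k, k <= d) *)
Definition mmul (p q : mpoly K n d) : mpoly K n d :=
  [ffun m : mon n d => \sum_(m1 : mon n d) \sum_(m2 : mon n d |
      [forall i, ((m1 i : nat) + (m2 i : nat) == (m i : nat))%N])
      p m1 * q m2].

Definition mone : mpoly K n d :=
  [ffun m : mon n d => if [forall i, (m i : nat) == 0%N] then 1 else 0].

Definition mpow (p : mpoly K n d) (k : nat) : mpoly K n d := iter k (mmul p) mone.

Definition linform (a : 'I_n -> K) : mpoly K n d :=
  [ffun m : mon n d => \sum_(i < n)
     if ((m i : nat) == 1%N) && (mdeg m == 1%N) then a i else 0].

(* m + e_i (only used when m i < d) *)
Definition mbump (m : mon n d) (i : 'I_n) : mon n d :=
  [ffun j : 'I_n => if j == i then inord (m j).+1 else m j].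

Definition pderiv (i : 'I_n) (p : mpoly K n d) : mpoly K n d :=
  [ffun m : mon n d => if ((m i : nat) < d)%N then ((m i).+1)%:R * p (mbump m i) else 0].

Definition pderivm (a : mon n d) (p : mpoly K n d) : mpoly K n d :=
  foldr (fun i q => iter (a i) (pderiv i) q) p (enum 'I_n).

(* apolar action of the linear form alpha = sum_i a_i alpha_i in T_1 *)
Definition lin_apolar (a : 'I_n -> K) (G : mpoly K n d) : mpoly K n d :=
  \sum_(i < n) a i *: pderiv i G.

(* Derivative orders with some exponent > d
   annihilate every element of P_{n,d}, so they are omitted. *)
Definition apolar_length (G : mpoly K n d) : nat :=
  \dim <<[seq pderivm a G | a <- enum (mon n d)]>>%VS.

Definition waring_decomp (F : mpoly K n d) (r : nat) : Prop :=
  exists (c : 'I_r -> K) (l : 'I_r -> 'I_n -> K),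
    F = \sum_(j < r) c j *: mpow (linform (l j)) d.

End MPoly.

(* Main.v *)
Require Import Defs.
From HB Require Import structures.
From mathcomp Require Import all_boot all_order all_algebra.
From mathcomp Require Import zify.
Import Order.TTheory GRing.Theory Num.Theory.
Local Open Scope ring_scope.
Set Implicit Arguments. Unset Strict Implicit.

Section Poly.
Variables (K : fieldType) (n d : nat).
Local Notation M := (mon n d).
Local Notation P := (mpoly K n d).

Lemma mon_eq (m m' : M) : (forall j, (m j : nat) = m' j) -> m = m'.
Proof. by move=> H; apply/ffunP=> j; apply: val_inj; exact: H. Qed.

Definition mdrop (m : M) (i : 'I_n) : M :=
  [ffun j : 'I_n => if j == i then inord (m j).-1 else m j].

Lemma mdropE (m : M) (i j : 'I_n) : (mdrop m i j : nat) = if j == i then (m i).-1 else m j.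
Proof.
rewrite ffunE; case: eqP => [->|//]; rewrite inordK //.
exact: leq_ltn_trans (leq_pred _) (ltn_ord _).
Qed.

Lemma mbumpE (m : M) (i j : 'I_n) : (m i < d)%N ->
  (mbump m i j : nat) = if j == i then (m i).+1 else m j.
Proof. by move=> H; rewrite ffunE; case: eqP => [->|//]; rewrite inordK. Qed.

Lemma mbumpE' (m : M) (i j : 'I_n) : j != i -> mbump m i j = m j.
Proof. by move=> H; rewrite ffunE (negbTE H). Qed.

Lemma scaleoE (c x : K^o) : c *: x = c * x.
Proof. by []. Qed.

Lemma pderiv_lin i : linear (@pderiv K n d i).
Proof.
move=> c p q; apply/ffunP=> m; rewrite !ffunE.
case: ifP => _; last by rewrite scaleoE mulr0 addr0.
by rewrite !scaleoE mulrDr mulrCA.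
Qed.

HB.instance Definition _ i :=
  GRing.isLinear.Build K P P *:%R (@pderiv K n d i) (pderiv_lin i).

Definition Xm i (q : P) : P :=
  [ffun m : M => if (0 < m i)%N then q (mdrop m i) else 0].

Lemma Xm_lin i : linear (Xm i).
Proof.
move=> c p q; apply/ffunP=> m; rewrite !ffunE.
by case: ifP => _; last by rewrite scaleoE mulr0 addr0.
Qed.

HB.instance Definition _ i :=
  GRing.isLinear.Build K P P *:%R (Xm i) (Xm_lin i).


Definition munit (i : 'I_n) : M := [ffun j : 'I_n => if j == i then inord 1 else ord0].

Lemma sum2_single (F : M -> M -> K) (Q : M -> M -> bool) (a b : M) :
  (forall x y, Q x y -> x = a /\ y = b) ->
  \sum_x \sum_(y | Q x y) F x y = if Q a b then F a b else 0.
Proof.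
move=> H; rewrite (bigD1 a) //= [X in _ + X]big1 ?addr0; last first.
  by move=> x xa; apply: big1 => y /H [xa']; rewrite xa' eqxx in xa.
case: ifP => Qab.
  rewrite (bigD1 b) //= big1 ?addr0 // => y /andP[Qy yb].
  by have [_ yb'] := H _ _ Qy; rewrite yb' eqxx in yb.
apply: big1 => y Qy; have [_ yb] := H _ _ Qy; move: Qy; by rewrite yb Qab.
Qed.

Lemma ifmul0 (b : bool) (x y : K) : (if b then x else 0) * y = if b then x * y else 0.
Proof. by case: b; rewrite ?mul0r. Qed.

Lemma mdegD1 (m : M) i : mdeg m = (m i + \sum_(j < n | j != i) m j)%N.
Proof. by rewrite /mdeg (bigD1 i). Qed.

Lemma mmul_lin (l : 'I_n -> K) (q : P) :
  mmul (@linform K n d l) q = \sum_(j < n) l j *: Xm j q.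
Proof.
apply/ffunP=> m; rewrite sum_ffunE ffunE.
under eq_bigr do under eq_bigr do rewrite ffunE mulr_suml.
under eq_bigr do rewrite exchange_big /=.
rewrite exchange_big /=; apply: eq_bigr => i _.
rewrite ffunE scaleoE ffunE.
under eq_bigr do under eq_bigr do rewrite ifmul0.
under eq_bigr do rewrite -big_mkcondr /=.
rewrite (@sum2_single _ _ (munit i) (mdrop m i)).
- set Q := (X in if X then _ else _).
  have [mi0|mi0] := posnP (m i).
    suff -> : Q = false by rewrite mulr0.
    apply/negbTE; rewrite /Q; apply/negP => /andP[/forallP/(_ i)/eqP C /andP[/eqP e1 _]].
    by move: C; rewrite mi0 e1.
  have d1 : (1 < d.+1)%N by rewrite ltnS (leq_trans mi0) // -ltnS.
  suff -> : Q by [].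
  rewrite /Q; apply/andP; split; first apply/forallP => j.
    rewrite mdropE ffunE; have [->|ji] := eqVneq j i.
      by rewrite inordK // add1n prednK.
    by [].  
  rewrite ffunE eqxx inordK // eqxx /= (mdegD1 _ i) ffunE eqxx inordK //.
  by rewrite big1 // => j /negbTE ji; rewrite ffunE ji.
- move=> x y /andP[/forallP C /andP[/eqP xi /eqP dx]].
  have xj : forall j, j != i -> (x j : nat) = 0%N.
    move: dx; rewrite (mdegD1 _ i) xi add1n => /eqP; rewrite eqSS sum_nat_eq0.
    by move=> /forallP H j ji; apply/eqP; move: (H j); rewrite ji.
  have d1 : (1 < d.+1)%N by rewrite -xi.
  split; apply: mon_eq => j.
    rewrite ffunE; case: eqP => [->|/eqP ji]; first by rewrite inordK.
    by rewrite xj.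
  rewrite mdropE; case: eqP => [->|/eqP ji].
    by move: (C i) => /eqP <-; rewrite xi.
  by move: (C j) => /eqP <-; rewrite xj.
Qed.


Lemma pderivE i (q : P) (m : M) :
  pderiv i q m = if (m i < d)%N then ((m i).+1)%:R * q (mbump m i) else 0.
Proof. by rewrite ffunE. Qed.
Lemma XmE i (q : P) (m : M) :
  Xm i q m = if (0 < m i)%N then q (mdrop m i) else 0.
Proof. by rewrite ffunE. Qed.

Lemma mbumpE2 (m : M) (i j : 'I_n) :
  mbump m i j = if j == i then inord (m j).+1 else m j.
Proof. by rewrite ffunE. Qed.
Lemma mdropE2 (m : M) (i j : 'I_n) :
  mdrop m i j = if j == i then inord (m j).-1 else m j.
Proof. by rewrite ffunE. Qed.

Global Opaque mbump mdrop Xm pderiv.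

Lemma pderiv_Xm i j (q : P) : i != j ->
  pderiv i (Xm j q) = Xm j (pderiv i q).
Proof.
move=> ij; apply/ffunP=> m; rewrite pderivE !XmE pderivE.
have ji : j != i by rewrite eq_sym.
rewrite mbumpE' // mdropE (negbTE ij).
case: ifP => mi; case: ifP => mj //; rewrite ?mulr0 //.
congr (_ * q _); apply/ffunP => t.
rewrite mbumpE2 !mdropE2 mbumpE2; have [->|ti] := eqVneq t i.
  by rewrite (negbTE ij).
by [].
Qed.

Lemma mbump_drop (m : M) i : (0 < m i)%N -> mbump (mdrop m i) i = m.
Proof.
move=> mi; apply: mon_eq => t; rewrite mbumpE2.
have [->|ti] := eqVneq t i.
  by rewrite mdropE eqxx prednK // inordK.
by rewrite mdropE (negbTE ti).
Qed.

Lemma mdrop_bump (m : M) i : (m i < d)%N -> mdrop (mbump m i) i = m.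
Proof.
move=> mi; apply: mon_eq => t; rewrite mdropE.
have [->|ti] := eqVneq t i; first by rewrite mbumpE // eqxx.
by rewrite mbumpE' //.
Qed.

Lemma pderiv_Xii i (q : P) : (forall m : M, (d <= m i)%N -> q m = 0) ->
  pderiv i (Xm i q) = Xm i (pderiv i q) + q.
Proof.
move=> Hq; apply/ffunP=> m; rewrite pderivE XmE [in RHS]ffunE XmE pderivE.
have [mi|mi] := ltnP (m i) d.
  rewrite mbumpE // eqxx /= mdrop_bump //.
  have [m0|m0] := posnP (m i).
    by rewrite m0 add0r mul1r.
  rewrite mdropE eqxx (leq_ltn_trans (leq_pred _) mi) mbump_drop //.
  by rewrite prednK // -natr1 mulrDl mul1r.
rewrite (Hq m mi) addr0; case: ifP => // m0; case: ifP => // _.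
by rewrite mbump_drop // Hq // mulr0.
Qed.


Lemma ffunZE (c : K) (p : P) m : (c *: p) m = c * p m.
Proof. by rewrite ffunE. Qed.
Lemma ffunDE (p q : P) m : (p + q) m = p m + q m.
Proof. by rewrite ffunE. Qed.

Lemma mpowS (p : P) k : mpow p k.+1 = mmul p (mpow p k).
Proof. by []. Qed.

Lemma mdeg_drop (m : M) j : (0 < m j)%N -> mdeg m = (mdeg (mdrop m j)).+1.
Proof.
move=> mj; rewrite !(mdegD1 _ j) mdropE eqxx.
rewrite -addSn prednK //; congr (_ + _)%N; apply: eq_bigr => t tj.
by rewrite mdropE (negbTE tj).
Qed.

Lemma mone_supp (m : M) : mdeg m != 0%N -> (@mone K n d) m = 0.
Proof.
move=> H; rewrite ffunE; case: ifP => // /forallP A.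
by rewrite /mdeg big1 ?eqxx // in H => j _; apply/eqP/A.
Qed.

Lemma pow_supp (l : 'I_n -> K) k (m : M) :
  mdeg m != k -> mpow (@linform K n d l) k m = 0.
Proof.
elim: k m => [|k IH] m H; first exact: mone_supp.
rewrite mpowS mmul_lin sum_ffunE big1 // => j _.
rewrite ffunZE XmE; case: ifP => mj; last by rewrite mulr0.
by rewrite IH ?mulr0 //; apply: contra H => /eqP e; rewrite (mdeg_drop mj) e.
Qed.

Lemma pderiv_mone i : pderiv i (@mone K n d) = 0.
Proof.
apply/ffunP=> m; rewrite pderivE ffunE; case: ifP => mi; last by rewrite ffunE.
rewrite ffunE; case: ifP; rewrite ?mulr0 // => /forallP/(_ i).
by rewrite mbumpE // eqxx.
Qed.

Lemma mi_le_deg (m : M) i : (m i <= mdeg m)%N.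
Proof. by rewrite (mdegD1 _ i) leq_addr. Qed.

Lemma pderiv_pow (l : 'I_n -> K) k i : (k <= d)%N ->
  pderiv i (mpow (@linform K n d l) k) =
    (k%:R * l i) *: mpow (@linform K n d l) k.-1.
Proof.
elim: k => [|k IH] kd; first by rewrite pderiv_mone mul0r scale0r.
rewrite mpowS mmul_lin raddf_sum (bigD1 i) //=.
rewrite [pderiv i (l i *: _)]linearZZ /= pderiv_Xii; last first.
  move=> m dm; apply: pow_supp; apply: contraTneq dm => e.
  by rewrite -ltnNge (leq_ltn_trans (mi_le_deg _ i)) // e.
rewrite IH ?(ltnW kd) //.
under eq_bigr => j ji do rewrite linearZZ /= pderiv_Xm 1?eq_sym // IH ?(ltnW kd) //.
rewrite scalerDr addrAC.
set Q := (_ *: mpow _ k.-1).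
have E : \sum_j l j *: Xm j Q = l i *: Xm i Q + \sum_(j | j != i) l j *: Xm j Q.
  by rewrite (bigD1 i).
rewrite -E /Q.
under eq_bigr do rewrite linearZZ scalerA mulrC -scalerA.
rewrite -scaler_sumr -mmul_lin.
clear Q E; case: k IH kd => [|k] IH kd; first by rewrite mul0r scale0r add0r mul1r.
rewrite -mpowS /= -scalerDl; congr (_ *: _).
by rewrite -!natr1 !mulrDl !mul1r.
Qed.


Lemma mbumpC (m : M) i j : i != j -> mbump (mbump m i) j = mbump (mbump m j) i.
Proof.
move=> ij; apply/ffunP => t; rewrite !mbumpE2.
have [->|ti] := eqVneq t i.
  by rewrite (negbTE ij).
by [].
Qed.

Lemma pderivC i j (q : P) : pderiv i (pderiv j q) = pderiv j (pderiv i q).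
Proof.
have [->//|ij] := eqVneq i j.
have ji : j != i by rewrite eq_sym.
apply/ffunP=> m; rewrite !pderivE !mbumpE' // mbumpC //.
case: ifP => mi; case: ifP => mj; rewrite ?mulr0 //.
by rewrite mulrCA.
Qed.

Lemma lin_apolar_lin (a : 'I_n -> K) : linear (@lin_apolar K n d a).
Proof.
move=> c p q; rewrite /lin_apolar scaler_sumr -big_split /=.
apply: eq_bigr => i _; rewrite linearP /= scalerDr !scalerA mulrC //.
Qed.

HB.instance Definition _ a :=
  GRing.isLinear.Build K P P *:%R (@lin_apolar K n d a) (lin_apolar_lin a).

Lemma pderiv_apolar a i (q : P) :
  pderiv i (lin_apolar a q) = lin_apolar a (pderiv i q).
Proof.
rewrite /lin_apolar linear_sum; apply: eq_bigr => j _ /=.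
by rewrite linearZZ /= pderivC.
Qed.

Lemma pderivm_apolar a (b : M) (q : P) :
  pderivm b (lin_apolar a q) = lin_apolar a (pderivm b q).
Proof.
rewrite /pderivm; elim: (enum 'I_n) => //= i s ->.
elim: (b i : nat) => //= k ->; by rewrite pderiv_apolar.
Qed.

Lemma pderivm_closed (U : {vspace P}) (b : M) (q : P) :
  (forall i v, v \in U -> pderiv i v \in U) -> q \in U -> pderivm b q \in U.
Proof.
move=> H qU; rewrite /pderivm; elim: (enum 'I_n) => //= i s IH.
elim: (b i : nat) => //= k IHk; exact: H.
Qed.


Lemma apolar_pow a (l : 'I_n -> K) k : (k <= d)%N ->
  lin_apolar a (mpow (@linform K n d l) k) =
  (k%:R * \sum_i a i * l i) *: mpow (@linform K n d l) k.-1.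
Proof.
move=> kd; rewrite /lin_apolar.
under eq_bigr do rewrite pderiv_pow // scalerA.
rewrite -scaler_suml mulr_sumr; congr (_ *: _); apply: eq_bigr => i _.
by rewrite mulrCA.
Qed.

Lemma main_gen (Hc : [pchar K] =i pred0) (F : P) (a : 'I_n -> K) r :
  waring_decomp F r ->
  (apolar_length (lin_apolar a F) <= r + apolar_length (lin_apolar a (lin_apolar a F)))%N.
Proof.
move=> [c [l ->]].
set A := lin_apolar a.
pose fA : 'Hom(P, P) := linfun A.
have fAE v : fA v = A v by rewrite lfunE.
pose al j := \sum_i a i * l j i.
pose g j k := al j *: mpow (@linform K n d (l j)) k.
pose Vs := <<[seq g jk.1 (jk.2 : nat) | jk : 'I_r * 'I_d]>>%VS.
pose W := <<[seq g j d.-1 | j : 'I_r]>>%VS.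
have gV j k : (k < d)%N -> g j k \in Vs.
  move=> kd; apply: memv_span.
  exact: (image_f (fun jk : 'I_r * 'I_d => g jk.1 (jk.2 : nat)) (x := (j, Ordinal kd))).
have nat0 k : (k.+1%:R : K) != 0.
  by have := (pcharf0P K).1 Hc k.+1; rewrite /= => ->.
have Vcl i v : v \in Vs -> pderiv i v \in Vs.
  have sub : (linfun (pderiv i) @: Vs <= Vs)%VS.
    rewrite limg_span; apply/span_subvP => w /mapP [x /imageP [[j k] _ ->] ->].
    rewrite lfunE /= /g linearZZ /= pderiv_pow; last exact: ltnW.
    case: k => [[|k] kd] /=; first by rewrite mul0r scale0r scaler0 mem0v.
    by rewrite scalerA mulrC -scalerA memvZ // gV // ltnW.
  by move=> vV; apply: (subvP sub); rewrite -(lfunE (pderiv i)); exact: memv_img.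
have AF : A (\sum_j c j *: mpow (@linform K n d (l j)) d) \in Vs.
  rewrite /A linear_sum; apply: memv_suml => j _.
  rewrite linearZZ /= apolar_pow //.
  have [d0|dpos] := posnP d.
    have -> : (d%:R : K) = 0 by rewrite d0.
    by rewrite mul0r !scale0r scaler0 mem0v.
  rewrite scalerA mulrA -scalerA memvZ //; apply: gV; by rewrite prednK.
set F0 := \sum_j _.
rewrite /apolar_length.
set D1 := <<[seq pderivm b (A F0) | b <- enum M]>>%VS.
set D2 := <<[seq pderivm b (A (A F0)) | b <- enum M]>>%VS.
have D1V : (D1 <= Vs)%VS.
  by apply/span_subvP => w /mapP [b _ ->]; exact: pderivm_closed.
have img : (fA @: D1)%VS = D2.
  rewrite limg_span -map_comp; congr <<_>>%VS; apply: eq_map => b /=.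
  by rewrite fAE /A !pderivm_apolar.
have k1 := limg_ker_dim fA D1; have k2 := limg_ker_dim fA Vs.
have sub : (Vs <= fA @: Vs + W)%VS.
  apply/span_subvP => w /imageP [[j k] _ ->] /=.
  have [kd|kd] := ltnP k.+1 d.
    have [a0|anz] := eqVneq (al j) 0; first by rewrite /g a0 scale0r mem0v.
    apply: (subvP (addvSl _ _)).
    have -> : g j k = fA (((k.+1%:R * al j)^-1) *: g j k.+1).
      rewrite fAE /A linearZZ /= /g linearZZ /= -mpowS apolar_pow // !scalerA.
      congr (_ *: _); rewrite -/(al j) mulrAC mulVf ?mul1r //.
      by rewrite mulf_neq0.
    by apply: memv_img; rewrite memvZ // gV.
  apply: (subvP (addvSr _ _)); apply: memv_span.
  have -> : (k : nat) = d.-1 by case: k kd => k /= kd1 kd2; lia.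
  exact: (image_f (fun j : 'I_r => g j d.-1)).
have h1 : (\dim Vs <= \dim (fA @: Vs) + r)%N.
  apply: leq_trans (dimvS sub) _; apply: leq_trans (dimv_add_leqif _ _) _.
  rewrite leq_add2l; apply: leq_trans (dim_span _) _.
  by rewrite size_image card_ord.
have h2 : (\dim (D1 :&: lker fA) <= \dim (Vs :&: lker fA))%N.
  by apply: dimvS; apply: capvS.
rewrite -img -k1; lia.
Qed.

End Poly.

Theorem mainTheorem5 (K : closedFieldType) (Hchar : [pchar K] =i pred0)
  (n d : nat) (F : mpoly K n d) (HF : homogeneous d F) (a : 'I_n -> K) :
  forall r : nat, waring_decomp F r ->
  (apolar_length (lin_apolar a F)
     <= r + apolar_length (lin_apolar a (lin_apolar a F)))%N.
Proof.
move=> r H; exact: main_gen Hchar F a r H.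
Qed.
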